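(* There exist time-inconsistent planning models $(G,w,s,t,\beta)$ in which the number of pairwise distinct costs of feasible $s$-$t$ paths is exponential in the number $n$ of vertices of $G$. (In particular, the difference between the largest and smallest cost of a feasible $s$-$t$ path can be exponential in $n$.)
   Context: A time-inconsistent planning model is a tuple $(G,w,s,t,\beta)$ where $G$ is a finite directed acyclic graph with $n$ vertices, $w:E(G)\to\mathbb{N}$ assigns a cost to each arc, $s,t\in V(G)$ are the start and target vertices, and $\beta\le 1$ is the present-bias parameter. For a vertex $v$ and a $v$-$t$ path $P$ with arcs $e_1,\dots,e_m$ (in order), the perceived cost of $P$ is $\zeta(P)=w(e_1)+\beta\sum_{i=2}^m w(e_i)$, and $\zeta(v)=\min\{\zeta(P): P \text{ a } v\text{-}t \text{ path}\}$. A $v$-$t$ path of perceived cost $\zeta(v)$ is called a perceived path. The agent starts at $s$; at a vertex $v\neq t$ it chooses some perceived $v$-$t$ path and traverses its first arc, and repeats until reaching $t$. An $s$-$t$ path $v_0=s,v_1,\dots,v_m=t$ is feasible if for every $i<m$ the arc $v_iv_{i+1}$ is the first arc of some perceived $v_i$-$t$ path, i.e., the agent may follow it under some way of breaking ties. The (actual) cost of a path is the sum of $w$ over its arcs. *)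

(* Defs.v *)
From HB Require Import structures.
From mathcomp Require Import all_boot all_order all_algebra.
From mathcomp Require Import reals.
Set Implicit Arguments. Unset Strict Implicit. Unset Printing Implicit Defensive.
Import Order.TTheory GRing.Theory Num.Theory.
Local Open Scope ring_scope.

(* A planning graph: vertex set 'I_n, arc relation e : rel 'I_n,
   arc costs w : 'I_n -> 'I_n -> nat (only meaningful on arcs).
   A walk from v is a sequence p of vertices with (path e v p); it visits
   v, p_1, ..., p_k and ends at (last v p). *)

Definition acyclic (n : nat) (e : rel 'I_n) : Prop :=
  forall (v : 'I_n) (p : seq 'I_n), path e v p -> last v p = v -> p = [::].

Definition vt_path (n : nat) (e : rel 'I_n) (v t : 'I_n) (p : seq 'I_n) : Prop :=
  path e v p /\ last v p = t.

Definition cost (n : nat) (w : 'I_n -> 'I_n -> nat) (v : 'I_n) (p : seq 'I_n) : nat :=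
  sumn (pairmap w v p).

Definition perceived_cost (R : realType) (n : nat) (w : 'I_n -> 'I_n -> nat)
  (beta : R) (v : 'I_n) (p : seq 'I_n) : R :=
  match p with
  | [::] => 0
  | x :: q => (w v x)%:R + beta * (cost w x q)%:R
  end.

Definition perceived_path (R : realType) (n : nat) (e : rel 'I_n)
  (w : 'I_n -> 'I_n -> nat) (beta : R) (t v : 'I_n) (p : seq 'I_n) : Prop :=
  vt_path e v t p /\
  forall q, vt_path e v t q -> perceived_cost w beta v p <= perceived_cost w beta v q.

(* p (from s) is a feasible s-t path: each arc v_i v_{i+1} is the first arc of
   some perceived v_i-t path. *)
Definition feasible (R : realType) (n : nat) (e : rel 'I_n)
  (w : 'I_n -> 'I_n -> nat) (beta : R) (s t : 'I_n) (p : seq 'I_n) : Prop :=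
  vt_path e s t p /\
  forall i, (i < size p)%N ->
    exists q, perceived_path e w beta t (nth s (s :: p) i) (nth s p i :: q).

(* Main.v *)
Require Import Defs.
From HB Require Import structures.
From mathcomp Require Import all_boot all_order all_algebra.
From mathcomp Require Import reals.
From mathcomp Require Import zify ring lra.
Import Order.TTheory GRing.Theory Num.Theory.
Set Implicit Arguments. Unset Strict Implicit.

Definition en (u v : nat) : bool := (v == u.+1) || (~~ odd u && (v == u.+2)).
Definition wn (u v : nat) : nat :=
  if odd u then 2 ^ (u./2).+1 else if v == u.+2 then 2 ^ (u./2) else 0.
Definition Dn (m u : nat) : nat := if odd u then 2 ^ m else 2 ^ m - 2 ^ (u./2).

Lemma half_dbl i : (i.*2)./2 = i.
Proof. by elim: i => //= i ->. Qed.
Lemma half_dbl1 i : (i.*2.+1)./2 = i.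
Proof. by rewrite /= uphalf_double. Qed.
Lemma odd_dbl1 i : odd (i.*2.+1).
Proof. by rewrite /= odd_double. Qed.

Lemma par u : exists i, u = i.*2 \/ u = i.*2.+1.
Proof.
exists u./2; have := odd_double_half u; case: (odd u) => /= h.
- by right; rewrite -[in LHS]h add1n.
- by left; rewrite -[in LHS]h add0n.
Qed.

Lemma wn_e0 i v : wn i.*2 v = if v == i.*2.+2 then 2 ^ i else 0.
Proof. by rewrite /wn odd_double half_dbl. Qed.
Lemma wn_o i v : wn i.*2.+1 v = 2 ^ i.+1.
Proof. by rewrite /wn odd_dbl1 half_dbl1. Qed.
Lemma Dn_e m i : Dn m i.*2 = 2 ^ m - 2 ^ i.
Proof. by rewrite /Dn odd_double half_dbl. Qed.
Lemma Dn_o m i : Dn m i.*2.+1 = 2 ^ m.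
Proof. by rewrite /Dn odd_dbl1. Qed.
Lemma en_e i v : en i.*2 v = (v == i.*2.+1) || (v == i.*2.+2).
Proof. by rewrite /en odd_double. Qed.
Lemma en_o i v : en i.*2.+1 v = (v == i.*2.+2).
Proof. by rewrite /en odd_dbl1 orbF. Qed.

Lemma pow_facts i m : i.+1 <= m -> 2 ^ i.+1 = 2 * 2 ^ i /\ 2 ^ i.+1 <= 2 ^ m.
Proof. by move=> h; rewrite expnS; split => //; rewrite -expnS leq_pexp2l. Qed.

Lemma en_lt u v : en u v -> u < v.
Proof. by rewrite /en => /orP [/eqP ->|/andP [_ /eqP ->]]. Qed.

Lemma L1 m u v : en u v -> v <= (2 * m) -> Dn m u <= wn u v + Dn m v.
Proof.
have [i [->|->]] := par u.
- rewrite en_e wn_e0 => /orP [/eqP->|/eqP->] hv.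
  + have -> : (i.*2.+1 == i.*2.+2) = false by lia.
    rewrite Dn_o Dn_e; lia.
  + rewrite eqxx.
    have -> : i.*2.+2 = (i.+1).*2 by [].
    rewrite Dn_e Dn_e.
    have [h1 h2] := (@pow_facts i m ltac:(lia)). lia.
- rewrite en_o wn_o => /eqP-> hv.
  have -> : i.*2.+2 = (i.+1).*2 by [].
  rewrite Dn_o Dn_e.
  have [h1 h2] := (@pow_facts i m ltac:(lia)). lia.
Qed.

Lemma L2 m u x : en u x -> x <= 2 * m -> 2 * wn u x + Dn m x = 2 * wn u u.+1 + Dn m u.+1.
Proof.
have [i [->|->]] := par u.
- rewrite en_e => /orP [/eqP->|/eqP->] hv //.
  rewrite !wn_e0 eqxx.
  have -> : (i.*2.+1 == i.*2.+2) = false by lia.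
  have -> : i.*2.+2 = (i.+1).*2 by [].
  rewrite Dn_o Dn_e.
  have [h1 h2] := (@pow_facts i m ltac:(lia)). lia.
- by rewrite en_o => /eqP->.
Qed.

Lemma L3 m u : u < 2 * m -> exists x, [/\ en u x, x <= 2 * m & wn u x + Dn m x = Dn m u].
Proof.
have [i [->|->]] := par u => hu.
- exists i.*2.+2; rewrite en_e wn_e0 eqxx orbT.
  have -> : i.*2.+2 = (i.+1).*2 by [].
  rewrite !Dn_e.
  have hm : i.+1 <= m by move: hu; rewrite -!mul2n; lia.
  have [h1 h2] := (@pow_facts i m hm).
  split => //; rewrite -?mul2n; lia.
- exists i.*2.+2; rewrite en_o wn_o eqxx.
  have -> : i.*2.+2 = (i.+1).*2 by [].
  rewrite Dn_e Dn_o.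
  have hm : i.+1 <= m by move: hu; rewrite -!mul2n; lia.
  have [h1 h2] := (@pow_facts i m hm).
  split => //; rewrite -?mul2n; lia.
Qed.

Lemma Dn_t m : Dn m (2 * m) = 0.
Proof. by rewrite mul2n Dn_e subnn. Qed.

Definition E (m : nat) : rel 'I_(2 * m).+1 := fun u v => en u v.
Definition W (m : nat) : 'I_(2 * m).+1 -> 'I_(2 * m).+1 -> nat := fun u v => wn u v.
Definition T (m : nat) : 'I_(2 * m).+1 := ord_max.
Arguments E : clear implicits. Arguments W : clear implicits. Arguments T : clear implicits.

Lemma acyc m : acyclic (E m).
Proof.
move=> v p.
have H : forall (p : seq 'I_(2 * m).+1) v, path (E m) v p -> v + size p <= last v p.
  elim=> [|x q IH] u /=; first by rewrite addn0.
  move=> /andP [/en_lt h1 h2]; have := IH _ h2; lia.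
move=> /H h /(f_equal val) e; rewrite e in h; by case: p h {H e} => //= *; lia.
Qed.

Lemma lower m (p : seq 'I_(2 * m).+1) u :
  path (E m) u p -> last u p = T m -> Dn m u <= cost (W m) u p.
Proof.
elim: p u => [|x q IH] u /=.
- by move=> _ ->; rewrite /T /= Dn_t.
- move=> /andP [h1 h2] hl; rewrite /cost /=.
  have := IH _ h2 hl; rewrite /cost => h3.
  have := @L1 m u x h1 ltac:(have := ltn_ord x; lia).
  move=> h4; apply: (leq_trans h4); rewrite leq_add2l; exact h3.
Qed.

Lemma shortest m k (u : 'I_(2 * m).+1) : 2 * m - u <= k ->
  exists q, vt_path (E m) u (T m) q /\ cost (W m) u q = Dn m u.
Proof.
elim: k u => [|k IH] u hk.
- have hu : u = T m by apply: val_inj => /=; have := ltn_ord u; lia.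
  by exists [::]; rewrite hu /vt_path /cost /= Dn_t.
- have [hu|hu] := leqP (2 * m) u.
  + have -> : u = T m by apply: val_inj => /=; have := ltn_ord u; lia.
    by exists [::]; rewrite /vt_path /cost /= Dn_t.
  + have [x [h1 h2 h3]] := @L3 m u hu.
    have hx : (inord x : 'I_(2 * m).+1) = x :> nat by rewrite inordK.
    have [q [[q1 q2] q3]] := IH (inord x) ltac:(rewrite hx; have := en_lt h1; lia).
    exists (inord x :: q); split; first split => //=.
    * by rewrite q1 andbT /E hx.
    * rewrite /cost /= -/(cost (W m) _ q) q3 /W hx h3 //.
Qed.

Lemma perc (R : realType) m (u x : 'I_(2 * m).+1) : E m u x ->
  exists q, perceived_path (E m) (W m) (2^-1 : R) (T m) u (x :: q).
Proof.
move=> hux.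
have [q [[q1 q2] q3]] := @shortest m (2 * m) x ltac:(lia).
exists q; split; first by split => //=; rewrite hux q1.
move=> [|y r] [/= r1 r2].
- exfalso; have := en_lt hux; have := ltn_ord x; rewrite r2 /T /=; lia.
- move: r1 => /andP [huy r1].
  have hl := lower r1 r2.
  have ex := @L2 m u x hux ltac:(have := ltn_ord x; lia).
  have ey := @L2 m u y huy ltac:(have := ltn_ord y; lia).
  rewrite -ey in ex.
  rewrite /perceived_cost q3.
  have ex' : (2 * (W m u x)%:R + (Dn m x)%:R = 2 * (W m u y)%:R + (Dn m y)%:R :> R)%R.
    have := congr1 (fun n : nat => (n%:R : R)%R) ex; rewrite /= !natrD => HH.
    rewrite /W; lra.
  have hl' : ((Dn m y)%:R <= (cost (W m) y r)%:R :> R)%R by rewrite ler_nat.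
  lra.
Qed.


Lemma cost_cons m (a c : 'I_(2 * m).+1) q : cost (W m) a (c :: q) = wn a c + cost (W m) c q.
Proof. by []. Qed.

Lemma many m j : j <= m -> forall k, k < 2 ^ j ->
  exists p, vt_path (E m) (inord (2 * (m - j))) (T m) p /\
    cost (W m) (inord (2 * (m - j))) p + 2 ^ (m - j) = 2 ^ m + k * 2 ^ (m - j).
Proof.
elim: j => [|j IH] hj k hk.
- have k0 : k = 0 by move: hk; rewrite expn0; lia.
  have -> : (inord (2 * (m - 0)) : 'I_(2 * m).+1) = T m.
    by apply: val_inj; rewrite /= inordK subn0 //.
  by exists [::]; split; [split | rewrite /cost /= k0 subn0 mul0n addn0].
- set i := m - j.+1.
  have hi : m - j = i.+1 by rewrite /i; lia.
  have hkk := odd_double_half k.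
  have hk2 : k./2 < 2 ^ j by move: hk hkk; rewrite expnS -?mul2n; lia.
  have [q [[q1 q2] q3]] := IH ltac:(lia) _ hk2.
  rewrite hi in q1 q2 q3.
  set c : 'I_(2 * m).+1 := inord (2 * i.+1).
  have vc : (c : nat) = (i.*2.+2) by rewrite /c inordK; rewrite -?mul2n /i; lia.
  have va : (inord (2 * i) : 'I_(2 * m).+1) = i.*2 :> nat by rewrite inordK; rewrite -?mul2n /i; lia.
  have [h1 h2] := (@pow_facts i m ltac:(rewrite /i; lia)).
  case ok : (odd k) hkk => /= hkk.
  + set b : 'I_(2 * m).+1 := inord (i.*2.+1).
    have vb : (b : nat) = (i.*2.+1) by rewrite /b inordK; rewrite -?mul2n /i; lia.
    exists (b :: c :: q); split; first split.
    * by rewrite /= q1 /E vb va en_e en_o vc !eqxx ?orbT.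
    * by rewrite /= q2.
    * rewrite !cost_cons va vb vc wn_e0 wn_o.
      have -> : (i.*2.+1 == i.*2.+2) = false by lia.
      move: q3; rewrite -/c; lia.
  + exists (c :: q); split; first split.
    * by rewrite /= q1 /E va en_e vc eqxx ?orbT.
    * by rewrite /= q2.
    * rewrite !cost_cons va vc wn_e0 eqxx.
      move: q3; rewrite -/c; lia.
Qed.

Theorem theorem1 (R : realType) :
  exists a b : nat, forall m : nat,
    exists (n : nat) (e : rel 'I_n) (w : 'I_n -> 'I_n -> nat) (s t : 'I_n) (beta : R),
      acyclic e /\ (0 < beta /\ beta <= 1)%R /\ (n <= a * m + b)%N /\
      exists cs : seq nat,
        uniq cs /\ size cs = (2 ^ m)%N /\
        forall c, c \in cs ->
          exists p : seq 'I_n, feasible e w beta s t p /\ cost w s p = c.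
Proof.
exists 2, 1 => m.
exists (2 * m).+1, (E m), (W m), (inord 0), (T m), (2^-1)%R.
split; first exact: acyc.
split; first by split; lra.
split; first by rewrite addn1.
exists [seq 2 ^ m - 1 + k | k <- iota 0 (2 ^ m)].
split; first by rewrite map_inj_uniq ?iota_uniq // => x y /eqP; rewrite eqn_add2l => /eqP.
split; first by rewrite size_map size_iota.
move=> c /mapP [k]; rewrite mem_iota add0n => hk ->.
have [p [[p1 p2] p3]] := @many m m (leqnn m) k hk.
move: p1 p2 p3; rewrite subnn muln0 expn0 muln1 => p1 p2 p3.
exists p; split; last first.
  have : 0 < 2 ^ m by rewrite expn_gt0.
  lia.
split; first by split.
move=> i hi; have := (pathP (inord 0) p1 i hi) => he.
exact: perc.
Qed.
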